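(* Let $p>q>1$ be relatively prime integers. For every $h\ge 0$, the set $\{w^{-1}L_{\frac pq}\cap A_p^h \mid w\in L_{\frac pq}\setminus\{\varepsilon\}\}$ is a partition of $A_p^h$ into $q^h$ non-empty languages.
   Context: $A_p=\{0,\ldots,p-1\}$. For $w=w_\ell\cdots w_0\in A_p^*$, $\mathrm{val}_{\frac pq}(w)=\sum_{i=0}^{\ell}\frac{w_i}{q}\left(\frac pq\right)^i$. Every integer $n\ge0$ has a unique representation $\mathrm{rep}_{\frac pq}(n)\in A_p^*$ not starting with $0$ with value $n$ ($\mathrm{rep}_{\frac pq}(0)=\varepsilon$), and $L_{\frac pq}=\{\mathrm{rep}_{\frac pq}(n): n\ge 0\}$. For a word $w$, $w^{-1}L=\{u: wu\in L\}$. *)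

(* Defs.v *)
From HB Require Import structures.
From mathcomp Require Import all_boot all_order all_algebra.
Set Implicit Arguments. Unset Strict Implicit. Unset Printing Implicit Defensive.
Import Order.TTheory GRing.Theory Num.Theory.
Local Open Scope ring_scope.

(* Words over A_p = {0,...,p-1} are sequences of 'I_p, written most
   significant digit first: w = w_l ... w_0 is the seq [:: w_l; ...; w_0]. *)

Definition digit (p : nat) (w : seq 'I_p) (i : nat) : nat :=
  nth 0%N (map (@nat_of_ord p) (rev w)) i.

Definition valpq (p q : nat) (w : seq 'I_p) : rat :=
  \sum_(i < size w) ((digit w i)%:R / q%:R) * (p%:R / q%:R) ^+ i.

Definition no_lead0 (p : nat) (w : seq 'I_p) : bool :=
  if w is a :: _ then (nat_of_ord a != 0)%N else true.

(* L_{p/q} = { rep_{p/q}(n) : n >= 0 }: the words not starting with 0 whose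
   value is a nonnegative integer (rep(n) is the unique such word of value n). *)
Definition inL (p q : nat) (w : seq 'I_p) : bool :=
  no_lead0 w && (valpq q w \is a Num.nat).

Definition quotL (p q h : nat) (w : seq 'I_p) : {set h.-tuple 'I_p} :=
  [set u : h.-tuple 'I_p | inL q (w ++ tval u)].

(* Main.v *)
Require Import Defs.
From HB Require Import structures.
From mathcomp Require Import all_boot all_order all_algebra.
Set Implicit Arguments. Unset Strict Implicit. Unset Printing Implicit Defensive.
Import Order.TTheory GRing.Theory Num.Theory.
From mathcomp Require Import ring lra zify.

Section S.
Variables (p q : nat).
Hypothesis hq : (0 < q)%N.

Local Open Scope ring_scope.

Lemma digit_cons (a : 'I_p) w i : (i < size w)%N -> digit (a :: w) i = digit w i.
Proof.
move=> hi; rewrite /digit rev_cons map_rcons nth_rcons size_map size_rev hi //.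
Qed.

Lemma digit_cons_last (a : 'I_p) w : digit (a :: w) (size w) = a.
Proof.
by rewrite /digit rev_cons map_rcons nth_rcons size_map size_rev ltnn eqxx.
Qed.

Lemma val_cons (a : 'I_p) w :
  valpq q (a :: w) = (a%:R / q%:R) * (p%:R / q%:R) ^+ size w + valpq q w.
Proof.
rewrite /valpq /= big_ord_recr /= digit_cons_last addrC; congr (_ + _).
by apply: eq_bigr => i _; rewrite digit_cons.
Qed.

Lemma val_nil : valpq q ([::] : seq 'I_p) = 0.
Proof. by rewrite /valpq big_ord0. Qed.

Lemma val_cat (w u : seq 'I_p) :
  valpq q (w ++ u) = (p%:R / q%:R) ^+ size u * valpq q w + valpq q u.
Proof.
elim: w => [|a w IH]; first by rewrite val_nil mulr0 add0r.
by rewrite cat_cons !val_cons IH size_cat exprD; ring.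
Qed.

Fixpoint num (w : seq 'I_p) : nat :=
  match w with [::] => 0%N | a :: w' => (a * p ^ size w' + q * num w')%N end.

Lemma val_num (w : seq 'I_p) : valpq q w = (num w)%:R / (q ^ size w)%:R.
Proof.
have q0 : (q%:R : rat) != 0 by rewrite pnatr_eq0 -lt0n.
elim: w => [|a w IH]; first by rewrite val_nil /= mul0r.
rewrite val_cons IH /= natrD !natrM !natrX exprS expr_div_n.
by field; rewrite ?q0 ?expf_neq0.
Qed.
Hypothesis hqp : (q < p)%N.
Hypothesis hcop : coprime p q.

Lemma p0 : (0 < p)%N. Proof. exact: leq_ltn_trans hqp. Qed.

Lemma nat_div (a b : nat) : (0 < b)%N ->
  ((a%:R / b%:R : rat) \is a Num.nat) = (b %| a)%N.
Proof.
move=> b0; have bn : (b%:R : rat) != 0 by rewrite pnatr_eq0 -lt0n.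
apply/idP/idP.
  move/natrP => [k hk]; apply/dvdnP; exists k.
  have : (a%:R : rat) = k%:R * b%:R by rewrite -hk mulfVK.
  by rewrite -natrM => /eqP; rewrite eqr_nat => /eqP.
move/dvdnP => [k ->]; rewrite natrM mulfK //; exact: natr_nat.
Qed.

Lemma nolead_cat (w u : seq 'I_p) : w <> [::] -> no_lead0 (w ++ u) = no_lead0 w.
Proof. by case: w. Qed.

Lemma memA (w u : seq 'I_p) N : w <> [::] -> inL q w -> valpq q w = N%:R ->
  inL q (w ++ u) = (q ^ size u %| p ^ size u * N + num u)%N.
Proof.
move=> hne /andP [hl _] hv.
have q0 : (q%:R : rat) != 0 by rewrite pnatr_eq0 -lt0n.
rewrite /inL nolead_cat // hl /= val_cat hv val_num -nat_div ?expn_gt0 ?hq //.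
congr (_ \is a Num.nat); rewrite natrD natrM !natrX expr_div_n.
by field; rewrite expf_neq0.
Qed.

Lemma ext_lemma (w : seq 'I_p) h : w <> [::] -> inL q w ->
  exists u : seq 'I_p, size u = h /\ inL q (w ++ u).
Proof.
move=> hne hw; elim: h => [|h [u [hs hu]]]; first by exists [::]; rewrite cats0.
have /natrP [m hm] : valpq q (w ++ u) \is a Num.nat by case/andP: hu.
set a := ((q - (p * m) %% q) %% q)%N.
have ha : (a < p)%N by apply: ltn_trans hqp; rewrite ltn_pmod.
exists (rcons u (Ordinal ha)); split; first by rewrite size_rcons hs.
rewrite -cats1 catA (@memA _ _ m) //; last by case: (w) hne.
rewrite /= expn1 expn0 muln1 muln0 addn0.
have : (p * m + a = q %[mod q])%N.
  rewrite /a modnDmr -modnDml subnKC //.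
  by apply: ltnW; rewrite ltn_pmod.
by rewrite modnn /dvdn => ->.
Qed.
Lemma nil_ok : [/\ inL q ([::] : seq 'I_p), valpq q ([::] : seq 'I_p) = 0%:R
   & (0 < 0)%N -> ([::] : seq 'I_p) <> [::]].
Proof. by rewrite /inL val_nil; split => //=; rewrite (natr_nat _ 0). Qed.

Lemma rep_lemma n : exists w : seq 'I_p,
  [/\ inL q w, valpq q w = n%:R & (0 < n)%N -> w <> [::]].
Proof.
elim: n {-2}n (leqnn n) => [|N IH] n hn.
  by exists [::]; rewrite leqn0 in hn; rewrite (eqP hn); exact: nil_ok.
case: (posnP n) => [->|n0]; first by exists [::]; exact: nil_ok.
set m := ((q * n) %/ p)%N.
have hm : (m <= N)%N.
  rewrite -ltnS; apply: leq_trans hn; rewrite ltn_divLR ?p0 //.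
  by rewrite mulnC ltn_pmul2l.
have [w' [hw' hv' _]] := IH m hm.
have ha : ((q * n) %% p < p)%N by rewrite ltn_pmod ?p0.
set a := Ordinal ha.
have hval : valpq q (w' ++ [:: a]) = n%:R.
  have q0 : (q%:R : rat) != 0 by rewrite pnatr_eq0 -lt0n.
  rewrite val_cat hv' val_num /= expn1 expn0 muln1 muln0 addn0.
  have e : (q * n = m * p + (q * n) %% p)%N by rewrite /m -divn_eq.
  apply: (mulfI q0); rewrite -natrM e natrD !natrM expr1 modnMDl modn_mod; by field.
exists (w' ++ [:: a]); split => //.
  apply/andP; split; last by rewrite hval natr_nat.
  case: w' hw' hv' {hval} => [|b w''] hw' hv'.
    rewrite val_nil in hv'; have m0 : m = 0%N.
      by apply/eqP; rewrite -(eqr_nat rat) -hv'.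
    rewrite /= -lt0n /=.
    have : (q * n < p)%N.
      by rewrite ltnNge -divn_gt0 ?p0 // -/m m0.
    move=> lt; rewrite modn_small // muln_gt0 hq n0 //.
  by case/andP: hw'.
by case: (w').
Qed.

Definition Cset h (r : nat) : {set h.-tuple 'I_p} :=
  [set u : h.-tuple 'I_p | (q ^ h %| p ^ h * r + num u)%N].

Lemma Cset_mod h r : Cset h r = Cset h (r %% q ^ h).
Proof.
apply/setP => u; rewrite !inE /dvdn.
by rewrite -[X in _ = (X == _)]modnDml modnMmr modnDml.
Qed.

Lemma quotL_C h (w : seq 'I_p) N : w <> [::] -> inL q w -> valpq q w = N%:R ->
  quotL q h w = Cset h N.
Proof.
move=> hne hw hv; apply/setP => u; rewrite !inE (memA _ hne hw hv).
by rewrite size_tuple.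
Qed.

Lemma pp0 h : (0 < p ^ h)%N. Proof. by rewrite expn_gt0 p0. Qed.

Lemma inv_lemma h : exists k, (k * p ^ h = 1 %[mod q ^ h])%N.
Proof.
have /(coprimeP _ (pp0 h)) [[k1 k2] /= e] := coprimeXr h (coprimeXl h hcop).
exists k1.
have -> : (k1 * p ^ h = k2 * q ^ h + 1)%N.
  move: e; set X := (k1 * p ^ h)%N; set Y := (k2 * q ^ h)%N; lia.
by rewrite modnMDl.
Qed.

Lemma cancel_lemma h k r r' x : (k * p ^ h = 1 %[mod q ^ h])%N ->
  (q ^ h %| p ^ h * r + x)%N -> (q ^ h %| p ^ h * r' + x)%N ->
  (r = r' %[mod q ^ h])%N.
Proof.
move=> hk; rewrite /dvdn => /eqP h1 /eqP h2.
have e : (p ^ h * r = p ^ h * r' %[mod q ^ h])%N.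
  by apply/eqP; rewrite -(eqn_modDr x) h1 h2.
rewrite -[r]mul1n -[r']mul1n -modnMml -hk modnMml -mulnA -modnMmr e.
by rewrite modnMmr mulnA -modnMml hk modnMml.
Qed.

Lemma cover_lemma h k x : (k * p ^ h = 1 %[mod q ^ h])%N ->
  (q ^ h %| p ^ h * (k * (q ^ h - x %% q ^ h)) + x)%N.
Proof.
move=> hk; rewrite /dvdn mulnA [(p ^ h * k)%N]mulnC -modnDml -modnMml hk.
rewrite modnMml mul1n modnDml -modnDmr subnK ?modnn //.
by apply: ltnW; rewrite ltn_pmod ?expn_gt0 ?hq.
Qed.
Lemma Cne h (r : nat) : exists u, u \in Cset h r.
Proof.
have [w [hw hv hne]] := rep_lemma (r + q ^ h).
have hne' : w <> [::] by apply: hne; rewrite addn_gt0 expn_gt0 hq orbT.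
have [u [hs hu]] := ext_lemma h hne' hw.
have hs' : size u == h by rewrite hs.
exists (Tuple hs'); rewrite Cset_mod -modnDr -Cset_mod.
by rewrite -(quotL_C h hne' hw hv) inE.
Qed.

Lemma main_sec h :
  exists F : {set {set h.-tuple 'I_p}},
    (forall X : {set h.-tuple 'I_p},
        X \in F <-> exists w : seq 'I_p, [/\ inL q w, w <> [::] & X = quotL q h w])
    /\ partition F [set: h.-tuple 'I_p]
    /\ #|F| = (q ^ h)%N.
Proof.
have Q0 : (0 < q ^ h)%N by rewrite expn_gt0 hq.
have [k hk] := inv_lemma h.
have Cinj (r r' : 'I_(q ^ h)) : Cset h r = Cset h r' -> r = r'.
  move=> E; have [u hu] := Cne h r.
  have hu' : u \in Cset h r' by rewrite -E.
  rewrite inE in hu; rewrite inE in hu'.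
  have := cancel_lemma hk hu hu'.
  by rewrite !modn_small // => /val_inj.
exists [set Cset h r | r : 'I_(q ^ h)]; split; [|split].
- move=> X; split.
    move=> /imsetP [r _ ->].
    have [w [hw hv hne]] := rep_lemma (r + q ^ h).
    have hne' : w <> [::] by apply: hne; rewrite addn_gt0 Q0 orbT.
    exists w; split => //; rewrite (quotL_C h hne' hw hv) Cset_mod.
    by rewrite [in RHS]Cset_mod modnDr.
  move=> [w [hw hne ->]].
  have /natrP [N hN] : valpq q w \is a Num.nat by case/andP: hw.
  apply/imsetP; exists (Ordinal (ltn_pmod N Q0)) => //=.
  by rewrite (quotL_C h hne hw hN) Cset_mod.
- apply/and3P; split.
  + apply/eqP/setP => u; rewrite in_setT; apply/bigcupP.
    exists (Cset h (Ordinal (ltn_pmod (k * (q ^ h - num u %% q ^ h)) Q0))).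
      by apply/imsetP; eexists.
    by rewrite /= -Cset_mod inE cover_lemma.
  + apply/trivIsetP => A B /imsetP [r _ ->] /imsetP [r' _ ->] neq.
    rewrite -setI_eq0; apply/eqP/setP => u; rewrite !inE.
    apply/negbTE/negP => /andP [h1 h2].
    have := cancel_lemma hk h1 h2; rewrite !modn_small // => /val_inj E.
    by rewrite E eqxx in neq.
  + apply/negP => /imsetP [r _ E].
    have [u hu] := Cne h r; by rewrite -E inE in hu.
- by rewrite card_imset ?card_ord // => r r'; exact: Cinj.
Qed.
End S.

Theorem mainTheorem9 (p q : nat) (hqp : (1 < q < p)%N) (hcop : coprime p q)
  (h : nat) :
  exists F : {set {set h.-tuple 'I_p}},
    (forall X : {set h.-tuple 'I_p},
        X \in F <-> exists w : seq 'I_p, [/\ inL q w, w <> [::] & X = quotL q h w])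
    /\ partition F [set: h.-tuple 'I_p]
    /\ #|F| = (q ^ h)%N.
Proof.
case/andP: hqp => h1 h2.
exact: (@main_sec p q (ltnW h1) h2 hcop h).
Qed.
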